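(* Let $1\le m\le k$, let $v_0,\pi_1,v_1,\dots,\pi_k$ be generated by Approximate Value Iteration with errors $\epsilon_1,\dots,\epsilon_{k-1}$, let $\epsilon_\infty=\max_{1\le j<k}\|\epsilon_j\|_\infty$, and let $\pi_{k,m}$ be the periodic non-stationary policy $\pi_k\,\pi_{k-1}\cdots\pi_{k-m+1}\,\pi_k\cdots\pi_{k-m+1}\cdots$. Then $$\|T_{\pi_k}v_{k-1}-v_{\pi_{k,m}}\|_\infty\le \gamma^m\|v_{k-m}-v_{\pi_{k,m}}\|_\infty+\frac{\gamma-\gamma^m}{1-\gamma}\,\epsilon_\infty.$$
   Context: A Markov Decision Process with finite state space $S$, finite action space $A$, reward $r(s,a)$, transitions $p(s'|s,a)$, discount $\gamma\in[0,1)$. For a policy $\pi:S\to A$, $r_\pi(s)=r(s,\pi(s))$, $P_\pi(s,s')=p(s'|s,\pi(s))$, and $T_\pi v=r_\pi+\gamma P_\pi v$. The Bellman optimality operator is $Tv=\max_\pi T_\pi v$, and $\pi$ is greedy w.r.t. $v$ if $T_\pi v=Tv$. Approximate Value Iteration: from arbitrary $v_0$, for $j\ge0$ pick any $\pi_{j+1}$ greedy w.r.t. $v_j$ and set $v_{j+1}=T_{\pi_{j+1}}v_j+\epsilon_{j+1}$ with arbitrary errors $\epsilon_{j+1}:S\to\mathbb R$. A non-stationary policy $\sigma_0\sigma_1\cdots$ uses $\sigma_t$ at time $t$, with value $\sum_{t\ge0}\gamma^t P_{\sigma_0}\cdots P_{\sigma_{t-1}}r_{\sigma_t}$. *)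

(* Defs.v *)
From Stdlib Require Import Reals Lra Lia List.
Import ListNotations.
Open Scope R_scope.

(* States are 0..nS-1 and actions are 0..nA-1 (encoded as nat).
   r s a : reward;  p s' s a : p(s'|s,a).
   Value functions are nat -> R (only values at s < nS matter).
   A (deterministic stationary) policy is nat -> nat. *)

Fixpoint fsum (n : nat) (f : nat -> R) : R :=
  match n with
  | O => 0
  | S n' => fsum n' f + f n'
  end.

Definition supnorm (nS : nat) (v : nat -> R) : R :=
  fold_right Rmax 0 (map (fun s => Rabs (v s)) (seq 0 nS)).

Definition Ppi (nS : nat) (p : nat -> nat -> nat -> R) (pi : nat -> nat)
  (v : nat -> R) : nat -> R :=
  fun s => fsum nS (fun s' => p s' s (pi s) * v s').

Definition Tpi (nS : nat) (r : nat -> nat -> R) (p : nat -> nat -> nat -> R)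
  (gamma : R) (pi : nat -> nat) (v : nat -> R) : nat -> R :=
  fun s => r s (pi s) + gamma * Ppi nS p pi v s.

Definition Qval (nS : nat) (r : nat -> nat -> R) (p : nat -> nat -> nat -> R)
  (gamma : R) (v : nat -> R) (s a : nat) : R :=
  r s a + gamma * fsum nS (fun s' => p s' s a * v s').

Definition Topt (nS nA : nat) (r : nat -> nat -> R) (p : nat -> nat -> nat -> R)
  (gamma : R) (v : nat -> R) : nat -> R :=
  fun s => fold_right Rmax (Qval nS r p gamma v s 0)
             (map (Qval nS r p gamma v s) (seq 0 nA)).

Definition greedy (nS nA : nat) (r : nat -> nat -> R) (p : nat -> nat -> nat -> R)
  (gamma : R) (pi : nat -> nat) (v : nat -> R) : Prop :=
  forall s, (s < nS)%nat -> Tpi nS r p gamma pi v s = Topt nS nA r p gamma v s.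

(* t-th term of the value of a non-stationary policy sigma_0 sigma_1 ... :
   nsterm sigma t = P_{sigma_0} ... P_{sigma_{t-1}} r_{sigma_t} *)
Fixpoint nsterm (nS : nat) (r : nat -> nat -> R) (p : nat -> nat -> nat -> R)
  (sigma : nat -> nat -> nat) (t : nat) : nat -> R :=
  match t with
  | O => fun s => r s (sigma O s)
  | S t' => Ppi nS p (sigma O) (nsterm nS r p (fun i => sigma (S i)) t')
  end.

Definition is_ns_value (nS : nat) (r : nat -> nat -> R) (p : nat -> nat -> nat -> R)
  (gamma : R) (sigma : nat -> nat -> nat) (w : nat -> R) : Prop :=
  forall s, (s < nS)%nat ->
    infinite_sum (fun t => gamma ^ t * nsterm nS r p sigma t s) (w s).

(* the periodic policy pi_{k,m} = pi_k pi_{k-1} ... pi_{k-m+1} pi_k ... *)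
Definition periodic_policy (pi : nat -> nat -> nat) (k m : nat) : nat -> nat -> nat :=
  fun t => pi (k - (t mod m))%nat.

(* eps_inf = max_{1 <= j < k} ||eps_j||_inf  (0 if k = 1) *)
Definition eps_inf (nS : nat) (eps : nat -> nat -> R) (k : nat) : R :=
  fold_right Rmax 0 (map (fun j => supnorm nS (eps j)) (seq 1 (k - 1))).

(* Main.v *)
Require Import Defs.
From Stdlib Require Import Reals Lra Lia List FunctionalExtensionality.
Open Scope R_scope.

Lemma fsum_ext n f g : (forall i, (i < n)%nat -> f i = g i) -> fsum n f = fsum n g.
Proof. induction n; simpl; intros H; auto. rewrite IHn; [rewrite H|]; auto; intros; apply H; lia. Qed.

Lemma fsum_plus n f g : fsum n (fun i => f i + g i) = fsum n f + fsum n g.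
Proof. induction n; simpl; [lra|rewrite IHn; lra]. Qed.

Lemma fsum_scal n c f : fsum n (fun i => c * f i) = c * fsum n f.
Proof. induction n; simpl; [lra|rewrite IHn; lra]. Qed.

Lemma fsum_le n f g : (forall i, (i < n)%nat -> f i <= g i) -> fsum n f <= fsum n g.
Proof. induction n; simpl; intros H; [lra|]. assert (f n <= g n) by (apply H; lia).
 assert (fsum n f <= fsum n g) by (apply IHn; intros; apply H; lia). lra. Qed.

Lemma fsum_abs n f : Rabs (fsum n f) <= fsum n (fun i => Rabs (f i)).
Proof. induction n; simpl. rewrite Rabs_R0; lra.
 eapply Rle_trans; [apply Rabs_triang|]. lra. Qed.

Lemma fsum_minus n f g : fsum n (fun i => f i - g i) = fsum n f - fsum n g.
Proof. induction n; simpl; [lra|rewrite IHn; lra]. Qed.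

Lemma Ppi_bound nS nA p pi f s c :
  (forall s' s a, (s' < nS)%nat -> (s < nS)%nat -> (a < nA)%nat -> 0 <= p s' s a) ->
  (forall s a, (s < nS)%nat -> (a < nA)%nat -> fsum nS (fun s' => p s' s a) = 1) ->
  (s < nS)%nat -> (pi s < nA)%nat ->
  (forall s', (s' < nS)%nat -> Rabs (f s') <= c) ->
  Rabs (Ppi nS p pi f s) <= c.
Proof.
 intros Hn Hs Hsn Ha Hf. unfold Ppi. eapply Rle_trans; [apply fsum_abs|].
 apply Rle_trans with (fsum nS (fun s' => c * p s' s (pi s))).
 - apply fsum_le. intros i Hi. rewrite Rabs_mult, Rabs_pos_eq by auto.
   specialize (Hn i s (pi s) Hi Hsn Ha). specialize (Hf i Hi). nra.
 - rewrite fsum_scal. rewrite Hs by auto. lra.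
Qed.

Lemma Tpi_diff nS nA r p gamma pi A B s c :
  (forall s' s a, (s' < nS)%nat -> (s < nS)%nat -> (a < nA)%nat -> 0 <= p s' s a) ->
  (forall s a, (s < nS)%nat -> (a < nA)%nat -> fsum nS (fun s' => p s' s a) = 1) ->
  0 <= gamma ->
  (s < nS)%nat -> (pi s < nA)%nat ->
  (forall s', (s' < nS)%nat -> Rabs (A s' - B s') <= c) ->
  Rabs (Tpi nS r p gamma pi A s - Tpi nS r p gamma pi B s) <= gamma * c.
Proof.
 intros Hn Hs Hg Hsn Ha Hf. unfold Tpi.
 replace (r s (pi s) + gamma * Ppi nS p pi A s - (r s (pi s) + gamma * Ppi nS p pi B s))
  with (gamma * Ppi nS p pi (fun s' => A s' - B s') s).
 - rewrite Rabs_mult, Rabs_pos_eq by auto. apply Rmult_le_compat_l; auto.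
   eapply Ppi_bound; eauto.
 - unfold Ppi.
   rewrite (fsum_ext _ (fun s' => p s' s (pi s) * (A s' - B s')) (fun s' => p s' s (pi s) * A s' - p s' s (pi s) * B s')) by (intros; ring).
   rewrite fsum_minus. ring.
Qed.

Lemma supnorm_ge nS v s : (s < nS)%nat -> Rabs (v s) <= supnorm nS v.
Proof. unfold supnorm. intros H. assert (H0: (0 <= s < 0 + nS)%nat) by lia. clear H. revert H0. generalize 0%nat as a. induction nS; intros a H; [lia|].
 simpl. destruct (Nat.eq_dec s a). subst; apply Rmax_l.
 eapply Rle_trans; [|apply Rmax_r]. apply IHnS. lia. Qed.

Lemma fold_ge (f : nat -> R) a n j : (a <= j < a + n)%nat ->
  f j <= fold_right Rmax 0 (map f (seq a n)).
Proof. revert a. induction n; intros a H; [lia|].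
 simpl. destruct (Nat.eq_dec j a). subst; apply Rmax_l.
 eapply Rle_trans; [|apply Rmax_r]. apply IHn. lia. Qed.

Lemma fold_nonneg (l : list R) : 0 <= fold_right Rmax 0 l.
Proof. induction l; simpl; [lra|]. eapply Rle_trans; [exact IHl|apply Rmax_r]. Qed.

Lemma supnorm_le nS v c : (forall s, (s < nS)%nat -> Rabs (v s) <= c) -> 0 <= c ->
  supnorm nS v <= c.
Proof. unfold supnorm. intros H Hc. assert (H0: forall s, (0 <= s < 0 + nS)%nat -> Rabs (v s) <= c) by (intros; apply H; lia).
 clear H. revert H0. generalize 0%nat as a. induction nS; intros a H; simpl; auto.
 apply Rmax_lub. apply H; lia. apply IHnS. intros; apply H; lia. Qed.

Lemma eps_inf_ge nS eps k j : (1 <= j <= k - 1)%nat -> supnorm nS (eps j) <= eps_inf nS eps k.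
Proof. intros H. unfold eps_inf. apply (fold_ge (fun j => supnorm nS (eps j))). lia. Qed.

Lemma eps_inf_nonneg nS eps k : 0 <= eps_inf nS eps k.
Proof. apply fold_nonneg. Qed.

Lemma supnorm_nonneg nS v : 0 <= supnorm nS v.
Proof. apply fold_nonneg. Qed.

Fixpoint Hs nS r p gamma (l : nat) (sg : nat -> nat -> nat) (f : nat -> R) : nat -> R :=
 match l with O => f | S l' => Tpi nS r p gamma (sg O) (Hs nS r p gamma l' (fun t => sg (S t)) f) end.

Definition PS nS r p gamma sg N s := sum_f_R0 (fun t => gamma ^ t * nsterm nS r p sg t s) N.

Lemma sum_shift f N : sum_f_R0 f (S N) = f O + sum_f_R0 (fun i => f (S i)) N.
Proof. induction N; simpl in *; [ring|]. rewrite IHN. ring. Qed.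

Lemma sum_scal' c f N : sum_f_R0 (fun i => c * f i) N = c * sum_f_R0 f N.
Proof. induction N; simpl; [ring|rewrite IHN; ring]. Qed.

Lemma Ppi_scal nS p pi c g s : Ppi nS p pi (fun s' => c * g s') s = c * Ppi nS p pi g s.
Proof. unfold Ppi. rewrite <- fsum_scal. apply fsum_ext; intros; ring. Qed.

Lemma Ppi_sum nS p pi (g : nat -> nat -> R) N s :
  Ppi nS p pi (fun s' => sum_f_R0 (fun t => g t s') N) s = sum_f_R0 (fun t => Ppi nS p pi (g t) s) N.
Proof. induction N; simpl; [reflexivity|]. rewrite <- IHN. unfold Ppi. rewrite <- fsum_plus.
 apply fsum_ext; intros; ring. Qed.

Lemma PS_step nS r p gamma sg N s :
  PS nS r p gamma sg (S N) s = Tpi nS r p gamma (sg O) (PS nS r p gamma (fun t => sg (S t)) N) s.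
Proof. unfold PS, Tpi. rewrite sum_shift. simpl nsterm. f_equal. simpl; ring.
 unfold PS. rewrite Ppi_sum. rewrite <- sum_scal'. apply sum_eq. intros i _.
 rewrite Ppi_scal. simpl. ring. Qed.

Lemma PS_iter nS r p gamma l : forall sg N s,
  PS nS r p gamma sg (N + l) s = Hs nS r p gamma l sg (PS nS r p gamma (fun t => sg (l + t)%nat) N) s.
Proof. induction l; intros sg N s.
 - rewrite Nat.add_0_r. reflexivity.
 - rewrite Nat.add_succ_r, PS_step. simpl Hs. f_equal. apply functional_extensionality. intros x.
   rewrite IHl. reflexivity.
Qed.

Lemma cv_const (c : R) : Un_cv (fun _ => c) c.
Proof. intros e He. exists O. intros. unfold R_dist. rewrite Rminus_diag, Rabs_R0. auto. Qed.

Lemma fsum_cont n (a : nat -> nat -> R) b : (forall i, (i < n)%nat -> Un_cv (fun N => a N i) (b i)) ->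
  Un_cv (fun N => fsum n (a N)) (fsum n b).
Proof. induction n; intros H; simpl. apply cv_const.
 apply CV_plus. apply IHn; intros; apply H; lia. apply H; lia. Qed.

Lemma Hs_cont nS r p gamma l : forall sg (f : nat -> nat -> R) g,
  (forall s, (s < nS)%nat -> Un_cv (fun N => f N s) (g s)) ->
  forall s, (s < nS)%nat -> Un_cv (fun N => Hs nS r p gamma l sg (f N) s) (Hs nS r p gamma l sg g s).
Proof. induction l; intros sg f g H s Hs0; simpl. auto.
 unfold Tpi. apply CV_plus. apply cv_const. apply CV_mult. apply cv_const.
 unfold Ppi. apply fsum_cont. intros i Hi. apply CV_mult. apply cv_const.
 apply IHl; auto. Qed.

Lemma fixed_point nS r p gamma m sg w :
  (forall t, sg (m + t)%nat = sg t) ->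
  is_ns_value nS r p gamma sg w ->
  forall s, (s < nS)%nat -> Hs nS r p gamma m sg w s = w s.
Proof. intros Hper Hw s Hs0.
 assert (Hf : (fun t => sg (m + t)%nat) = sg) by (apply functional_extensionality; auto).
 assert (Hcv : forall s, (s < nS)%nat -> Un_cv (fun N => PS nS r p gamma sg N s) (w s)).
 { intros s' Hs'. exact (Hw s' Hs'). }
 apply UL_sequence with (fun N => PS nS r p gamma sg (N + m) s).
 - eapply Un_cv_ext. 2: apply (Hs_cont nS r p gamma m sg (fun N => PS nS r p gamma sg N) w Hcv s Hs0).
   intros N. simpl. rewrite PS_iter, Hf. reflexivity.
 - intros e He. destruct (Hcv s Hs0 e He) as [N0 HN]. exists N0. intros n Hn. apply HN. lia.
Qed.

Fixpoint G nS r p gamma (pi : nat -> nat -> nat) k m (l : nat) (f : nat -> R) : nat -> R :=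
 match l with O => f | S l' => Tpi nS r p gamma (pi (k - m + l' + 1)%nat) (G nS r p gamma pi k m l' f) end.

Lemma Hs_G nS r p gamma pi k m : (1 <= m)%nat -> (m <= k)%nat -> forall l, (l <= m)%nat -> forall f,
  Hs nS r p gamma l (fun t => periodic_policy pi k m (m - l + t)%nat) f = G nS r p gamma pi k m l f.
Proof. intros Hm Hmk. induction l; intros Hl f; simpl. reflexivity.
 assert (E1 : (fun t => periodic_policy pi k m (m - S l + S t)%nat) = (fun t => periodic_policy pi k m (m - l + t)%nat))
   by (apply functional_extensionality; intros; f_equal; lia).
 rewrite E1, IHl by lia. f_equal. unfold periodic_policy. rewrite Nat.mod_small by lia. f_equal. lia.
Qed.

Lemma G_S nS r p gamma pi k m l f :
  G nS r p gamma pi k m (S l) f = Tpi nS r p gamma (pi (k - m + l + 1)%nat) (G nS r p gamma pi k m l f).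
Proof. reflexivity. Qed.

Lemma pow_le1 g n : 0 <= g <= 1 -> g ^ n <= 1.
Proof. intros H. induction n; simpl; [lra|]. pose proof (pow_le g n (proj1 H)). nra. Qed.

Theorem mainTheorem6
  (nS nA : nat) (HnS : (1 <= nS)%nat) (HnA : (1 <= nA)%nat)
  (r : nat -> nat -> R) (p : nat -> nat -> nat -> R) (gamma : R)
  (Hp_nonneg : forall s' s a, (s' < nS)%nat -> (s < nS)%nat -> (a < nA)%nat -> 0 <= p s' s a)
  (Hp_sum : forall s a, (s < nS)%nat -> (a < nA)%nat -> fsum nS (fun s' => p s' s a) = 1)
  (Hgamma : 0 <= gamma < 1)
  (k m : nat) (Hm1 : (1 <= m)%nat) (Hmk : (m <= k)%nat)
  (v : nat -> nat -> R) (pi : nat -> nat -> nat) (eps : nat -> nat -> R)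
  (Hpi_adm : forall j s, (1 <= j <= k)%nat -> (s < nS)%nat -> (pi j s < nA)%nat)
  (Hgreedy : forall j, (j + 1 <= k)%nat -> greedy nS nA r p gamma (pi (j + 1)%nat) (v j))
  (Hupdate : forall j, (j + 1 <= k - 1)%nat -> forall s, (s < nS)%nat ->
     v (j + 1)%nat s = Tpi nS r p gamma (pi (j + 1)%nat) (v j) s + eps (j + 1)%nat s)
  (w : nat -> R) (Hw : is_ns_value nS r p gamma (periodic_policy pi k m) w) :
  supnorm nS (fun s => Tpi nS r p gamma (pi k) (v (k - 1)%nat) s - w s)
  <= gamma ^ m * supnorm nS (fun s => v (k - m)%nat s - w s)
     + (gamma - gamma ^ m) / (1 - gamma) * eps_inf nS eps k.
Proof.
 set (E := eps_inf nS eps k). set (X := supnorm nS (fun s => v (k - m)%nat s - w s)).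
 assert (HE : 0 <= E) by apply eps_inf_nonneg.
 assert (HX : 0 <= X) by apply supnorm_nonneg.
 assert (Hfix : forall s, (s < nS)%nat -> G nS r p gamma pi k m m w s = w s).
 { intros s Hs. rewrite <- (Hs_G nS r p gamma pi k m) by lia.
   replace (fun t => periodic_policy pi k m (m - m + t)%nat) with (periodic_policy pi k m)
     by (apply functional_extensionality; intros; rewrite Nat.sub_diag; reflexivity).
   apply fixed_point; auto. intros t. unfold periodic_policy. f_equal. f_equal.
   replace (m + t)%nat with (t + 1 * m)%nat by lia. apply Nat.Div0.mod_add. }
 assert (Claim : forall l, (l < m)%nat -> forall s, (s < nS)%nat ->
   Rabs (Tpi nS r p gamma (pi (k - m + l + 1)%nat) (v (k - m + l)%nat) s - G nS r p gamma pi k m (S l) w s)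
   <= gamma ^ (S l) * X + (gamma - gamma ^ (S l)) / (1 - gamma) * E).
 { induction l; intros Hl s Hs.
   - rewrite G_S. simpl G.
     apply Rle_trans with (gamma * X).
     + eapply Tpi_diff; eauto. lra. apply Hpi_adm; lia. intros s' Hs'. rewrite Nat.add_0_r.
       apply (supnorm_ge nS (fun s => v (k - m)%nat s - w s)); auto.
     + right. simpl. field. lra.
   - rewrite (G_S _ _ _ _ _ _ _ (S l)).
     apply Rle_trans with (gamma * (gamma ^ (S l) * X + (gamma - gamma ^ (S l)) / (1 - gamma) * E + E)).
     + eapply Tpi_diff; eauto. lra. apply Hpi_adm; lia. intros s' Hs'.
       replace (k - m + S l)%nat with (k - m + l + 1)%nat by lia.
       rewrite (Hupdate (k - m + l)%nat) by (auto; lia).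
       specialize (IHl ltac:(lia) s' Hs').
       assert (He : Rabs (eps (k - m + l + 1)%nat s') <= E).
       { eapply Rle_trans. apply supnorm_ge; eauto. apply eps_inf_ge. lia. }
       replace (Tpi nS r p gamma (pi (k - m + l + 1)%nat) (v (k - m + l)%nat) s' +
                eps (k - m + l + 1)%nat s' - G nS r p gamma pi k m (S l) w s')
         with ((Tpi nS r p gamma (pi (k - m + l + 1)%nat) (v (k - m + l)%nat) s' - G nS r p gamma pi k m (S l) w s')
               + eps (k - m + l + 1)%nat s') by ring.
       eapply Rle_trans. apply Rabs_triang. lra.
     + right. simpl. field. lra. }
 apply supnorm_le.
 - intros s Hs. pose proof (Claim (m - 1)%nat ltac:(lia) s Hs) as H.
   replace (k - m + (m - 1) + 1)%nat with k in H by lia.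
   replace (k - m + (m - 1))%nat with (k - 1)%nat in H by lia.
   replace (S (m - 1)) with m in H by lia.
   rewrite Hfix in H; auto.
 - assert (gamma ^ m <= gamma).
   { replace m with (S (m - 1)) by lia. simpl. pose proof (pow_le1 gamma (m - 1) ltac:(lra)). nra. }
   pose proof (pow_le gamma m (proj1 Hgamma)).
   apply Rplus_le_le_0_compat. apply Rmult_le_pos; auto.
   apply Rmult_le_pos; auto. unfold Rdiv. apply Rmult_le_pos. lra.
   left. apply Rinv_0_lt_compat. lra.
Qed.
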